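(* Let $m$ and $n$ be positive integers with $n$ composite, and suppose that (i) $n$ is squarefree, and (ii) for every prime divisor $p$ of $n$ and every integer $r$ with $1\le r\le m$ there is an integer $i\ge 0$ such that $n\equiv p^i \pmod{p^r-1}$. Then for every integer $r$ with $1\le r\le m$ we have $\binom{n}{r}\equiv 0 \pmod n$. *)

(* Defs.v *)
From mathcomp Require Import all_boot.
Set Implicit Arguments. Unset Strict Implicit. Unset Printing Implicit Defensive.

Definition squarefree (n : nat) : Prop :=
  forall p : nat, prime p -> ~~ (p * p %| n).

Definition composite (n : nat) : Prop := 1 < n /\ ~~ prime n.

(* Main.v *)
Require Import Defs.
From mathcomp Require Import all_boot all_fingroup all_solvable.

Theorem lemma2 (m n : nat) :
  0 < m -> composite n -> squarefree n ->
  (forall p r : nat, prime p -> p %| n -> 1 <= r <= m ->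
     exists i : nat, n = p ^ i %[mod p ^ r - 1]) ->
  forall r : nat, 1 <= r <= m -> 'C(n, r) = 0 %[mod n].
Proof.
move=> m0 [n1 npr] sqf H r /andP[r1 rm].
have key : forall p, prime p -> p %| n -> m < p.
  move=> p pp pn; rewrite ltnNge; apply/negP => pm.
  have n0 : 0 < n by apply: ltnW.
  have p1 := prime_gt1 pp.
  have pn' : 1 < n %/ p.
    rewrite ltnNge; apply/negP => le1.
    have : n = p.
      move: (divnK pn) => E.
      have : n %/ p != 0.
        apply/negP => /eqP e; move: E; rewrite e mul0n => e'; move: n0; rewrite -e'.
        by [].
      case: (n %/ p) le1 E => [|[|k]] //= _ E _; by rewrite -E mul1n.
    by move=> e; move: npr; rewrite e pp.
  set q := pdiv (n %/ p).
  have qp : prime q := pdiv_prime pn'.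
  have qnp : q %| n %/ p := pdiv_dvd _.
  have qn : q %| n by exact: dvdn_trans qnp (dvdn_div pn).
  have qnep : q != p.
    apply/negP => /eqP e; move: (sqf p pp) => /negP; apply.
    by rewrite -(divnK pn) dvdn_mul // -{1}e.
  have rng : 1 <= p.-1 <= m.
    apply/andP; split; first by rewrite -subn1 subn_gt0.
    by apply: leq_trans pm; apply: leq_pred.
  have [i Hi] := H q (p.-1) qp qn rng.
  have cop : coprime q p.
    by rewrite coprime_sym prime_coprime // dvdn_prime2 // eq_sym.
  have F : p %| q ^ p.-1 - 1.
    have := Euler_exp_totient cop; rewrite totient_prime //.
    move=> e; rewrite -(@eqn_mod_dvd p _ 1) ?expn_gt0 ?prime_gt0 //.
    by rewrite e.
  have : n %% p = q ^ i %% p by rewrite -(modn_dvdm n F) -(modn_dvdm (q ^ i) F) Hi.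
  rewrite (eqP pn) => /esym/eqP; rewrite -/(dvdn p _) Euclid_dvdX // dvdn_prime2 //.
  by rewrite eq_sym (negbTE qnep).
have cop : coprime n r.
  apply: contraT; rewrite /coprime => g1.
  have g1' : 1 < gcdn n r.
    by rewrite ltn_neqAle eq_sym g1 gcdn_gt0 (ltnW n1).
  have pp := pdiv_prime g1'.
  have pg := pdiv_dvd (gcdn n r).
  have := key _ pp (dvdn_trans pg (dvdn_gcdl _ _)).
  have := dvdn_leq (leq_trans (isT : 0 < 1) r1) (dvdn_trans pg (dvdn_gcdr _ _)).
  by move=> a b; move: (leq_ltn_trans (leq_trans a rm) b); rewrite ltnn.
rewrite mod0n; apply/eqP; rewrite -/(dvdn n _).
case: r r1 rm cop => [|r] // _ _ cop.
rewrite -(Gauss_dvdr _ cop) -mul_bin_diag dvdn_mulr //.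
Qed.
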